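(* Let $G=(V,E)$ be an $n$-vertex graph with at least one edge, and define $$\delta_1(G)=\min_{uv\in E}|N(u)\cup N(v)|,\qquad \delta_2(G)=\max_{uv\in E}|N(u)\cup N(v)|.$$ Then $$2\le \frac{3n+2-3\delta_2(G)}{n+1-\delta_2(G)}\le av_1(G)\le \frac{n+4-\delta_1(G)}{2}\le\frac{n+2}{2}.$$
   Context: All graphs are finite and simple. For a graph $G=(V,E)$, a set $S\subseteq V$ is a $1$-nearly independent vertex set if the subgraph induced by $S$ has exactly one edge. $\sigma_1(G)$ is the number of such sets, $S_1(G)$ the sum of their sizes, and $av_1(G)=S_1(G)/\sigma_1(G)$. $N(v)$ is the set of neighbours of $v$. *)

(* Defs.v *)
From mathcomp Require Import all_boot all_order all_algebra.
Set Implicit Arguments. Unset Strict Implicit. Unset Printing Implicit Defensive.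
Import Order.TTheory GRing.Theory Num.Theory.

Section Defs.
Variables (T : finType) (e : rel T).

Definition simple_graph : Prop := symmetric e /\ irreflexive e.

Definition nbhd (v : T) : {set T} := [set w | e v w].

Definition induced_edges (S : {set T}) : {set {set T}} :=
  [set [set x; y] | x in S, y in S & e x y].

Definition nearly_indep1 (S : {set T}) : bool := #|induced_edges S| == 1%N.

Definition sigma1 : nat := #|[set S : {set T} | nearly_indep1 S]|.
Definition S1 : nat := \sum_(S : {set T} | nearly_indep1 S) #|S|.

Definition av1 (R : fieldType) : R := (S1%:R) / (sigma1%:R).

Definition union_nb (u v : T) : nat := #|nbhd u :|: nbhd v|.

(* delta_1 = min over edges uv of |N(u) ∪ N(v)|; the default #|T| is an upper
   bound of every term, so it is harmless when at least one edge exists *)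
Definition delta1 : nat :=
  \big[minn/#|T|]_(p : T * T | e p.1 p.2) union_nb p.1 p.2.

Definition delta2 : nat :=
  \max_(p : T * T | e p.1 p.2) union_nb p.1 p.2.

End Defs.

(* Main.v *)
Require Import Defs.
From mathcomp Require Import all_boot all_order all_algebra.
From mathcomp Require Import zify ring lra.
Import Order.TTheory GRing.Theory Num.Theory.

Section Comb.
Variables (T : finType) (e : rel T).
Hypotheses (esym : symmetric e) (eirr : irreflexive e).

Definition iso (S : {set T}) : {set T} := [set x in S | [forall y in S, ~~ e x y]].
Definition out (S : {set T}) : {set T} := [set x | (x \notin S) && [forall y in S, ~~ e x y]].

Lemma ie_add x (S : {set T}) : [forall y in S, ~~ e x y] ->
  induced_edges e (x |: S) = induced_edges e S.
Proof.
move=> /forall_inP H; apply/setP => E; apply/imset2P/imset2P.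
- case=> a b; rewrite !inE => /orP[/eqP->|aS] /andP[/orP[/eqP->|bS] eab] ->.
  + by rewrite eirr in eab.
  + by rewrite (negbTE (H _ bS)) in eab.
  + by rewrite esym (negbTE (H _ aS)) in eab.
  + by exists a b => //; rewrite inE bS.
- case=> a b aS; rewrite inE => /andP[bS eab] ->.
  by exists a b; rewrite ?inE ?aS ?bS ?orbT.
Qed.

Lemma NI1_edge (S : {set T}) : nearly_indep1 e S -> exists u v, [/\ u \in S, v \in S, e u v &
  forall x y, x \in S -> y \in S -> e x y -> [set x; y] = [set u; v]].
Proof.
move=> /cards1P[E HE].
have : E \in induced_edges e S by rewrite HE set11.
case/imset2P=> u v uS; rewrite inE => /andP[vS euv] EE.
exists u, v; split=> // x y xS yS exy.
have : [set x; y] \in induced_edges e S by apply/imset2P; exists x y; rewrite ?inE ?yS.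
by rewrite HE inE -EE => /eqP.
Qed.

Lemma double_count (P : pred {set T}) (f : {set T} -> {set T}) :
  \sum_(S | P S) #|f S| = \sum_x #|[set S | P S & x \in f S]|.
Proof.
rewrite (eq_bigr (fun S => \sum_x (x \in f S : nat))); last first.
  by move=> S _; rewrite -sum1_card big_mkcond.
rewrite exchange_big; apply: eq_bigr => x _.
rewrite -sum1dep_card big_mkcondr /=; apply: eq_bigr => S _.
by case: (x \in f S).
Qed.

Lemma count_x x :
  #|[set S | nearly_indep1 e S & x \in iso S]| = #|[set S | nearly_indep1 e S & x \in out S]|.
Proof.
have -> : [set S | nearly_indep1 e S & x \in iso S] =
   (fun S => x |: S) @: [set S | nearly_indep1 e S & x \in out S].
  apply/setP => S; apply/idP/imsetP.
  - rewrite inE => /andP[NS]; rewrite inE => /andP[xS /forall_inP H].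
    exists (S :\ x); last by rewrite setD1K.
    have H' : [forall y in S :\ x, ~~ e x y].
      by apply/forall_inP => y; rewrite inE => /andP[_ /H].
    move: NS; rewrite inE /nearly_indep1 -(ie_add x (S :\ x) H') setD1K // => -> /=; rewrite inE setD11 /=.
    exact: H'.
  - case=> S'; rewrite inE => /andP[NS]; rewrite [x \in out S']inE => /andP[xS' H] ->.
    move: NS; rewrite inE /nearly_indep1 (ie_add x S' H) => -> /=; rewrite inE setU11 /=.
    apply/forall_inP => y; rewrite !inE => /orP[/eqP->|yS]; first by rewrite eirr.
    by move/forall_inP: H; apply.
rewrite card_in_imset // => S1 S2; rewrite !inE => /andP[_ /andP[x1 _]] /andP[_ /andP[x2 _]] E.
by rewrite -(setU1K x1) -(setU1K x2) E.
Qed.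

Lemma sum_iso_out :
  \sum_(S | nearly_indep1 e S) #|iso S| = \sum_(S | nearly_indep1 e S) #|out S|.
Proof. by rewrite !double_count; apply: eq_bigr => x _; exact: count_x. Qed.


Lemma per_S (S : {set T}) : nearly_indep1 e S -> exists u v, [/\ e u v,
  #|S| = (#|iso S|).+2,
  #|out S| + #|iso S| + union_nb e u v <= #|T| &
  (iso S = set0 -> #|T| <= #|out S| + union_nb e u v)].
Proof.
move=> /NI1_edge[u [v [uS vS euv Hu]]].
have key x : x \in S -> x \notin iso S -> (x == u) || (x == v).
  move=> xS; rewrite inE xS /= => /forall_inPn[y yS /negbNE exy].
  by rewrite -in_set2 -(Hu x y) // set21.
have uvni : (u \notin iso S) && (v \notin iso S).
  rewrite [u \in iso S]inE [v \in iso S]inE uS vS /=; apply/andP; split; apply/forall_inPn.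
  - by exists v => //; rewrite euv.
  - by exists u => //; rewrite esym euv.
have nuv : u != v by apply/eqP=> E; rewrite E eirr in euv.
have isoS : iso S \subset S by apply/subsetP=> y; rewrite inE => /andP[].
have noU y : y \in iso S -> y \notin nbhd e u :|: nbhd e v.
  rewrite !inE => /andP[_ /forall_inP H]; apply/negP => /orP[] h.
  - by move: (H _ uS); rewrite esym h.
  - by move: (H _ vS); rewrite esym h.
exists u, v; split=> //.
- have E : S :\: iso S = [set u; v].
    apply/setP=> y; rewrite in_setD in_set2; apply/idP/idP.
    + by case/andP=> h yS; apply: key.
    + by case/orP=> /eqP->; case/andP: uvni => a b; rewrite ?a ?b.
  have := cardsD S (iso S); rewrite E cards2 nuv (setIidPr isoS) => h.
  have := subset_leq_card isoS; lia.
- have disj : [disjoint iso S & nbhd e u :|: nbhd e v].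
    by rewrite disjoints_subset; apply/subsetP=> y /noU; rewrite in_setC.
  have h1 := (leq_card_setU (iso S) (nbhd e u :|: nbhd e v)).2; rewrite disj in h1.
  move/eqP: h1 => h1.
  have sub : out S \subset ~: (iso S :|: (nbhd e u :|: nbhd e v)).
    apply/subsetP=> y; rewrite [y \in out S]inE => /andP[yS /forall_inP H].
    rewrite !inE negb_or; apply/andP; split.
      by apply/negP=> /andP[/(negP yS)].
    by rewrite negb_or (esym u y) (esym v y) (negbTE (H _ uS)) (negbTE (H _ vS)).
  have := subset_leq_card sub; have := cardsC (iso S :|: (nbhd e u :|: nbhd e v)).
  rewrite /union_nb; lia.
- move=> i0.
  have sub : ~: (nbhd e u :|: nbhd e v) \subset out S.
    apply/subsetP=> y; rewrite !inE negb_or => /andP[nu nv].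
    have yS : y \notin S.
      apply/negP=> yS; have := key y yS; rewrite i0 inE => /(_ isT) /orP[] /eqP E.
      - by move: nv; rewrite E esym euv.
      - by move: nu; rewrite E euv.
    rewrite yS /=; apply/forall_inP=> z zS; apply/negP=> eyz.
    have := key z zS; rewrite i0 inE => /(_ isT) /orP[] /eqP E.
    - by move: nu; rewrite -E esym eyz.
    - by move: nv; rewrite -E esym eyz.
  have := subset_leq_card sub; have := cardsC (nbhd e u :|: nbhd e v).
  rewrite /union_nb; lia.
Qed.

Lemma bigmin_le (I : eqType) (r : seq I) (P : pred I) (F : I -> nat) x j :
  j \in r -> P j -> (\big[minn/x]_(i <- r | P i) F i <= F j)%N.
Proof.
elim: r => // a r IH; rewrite inE big_cons => /orP[/eqP<- Pj | jr Pj].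
  by rewrite Pj geq_minl.
case: (P a); last exact: IH.
by rewrite geq_min IH ?orbT.
Qed.

Lemma union_bounds u v : e u v ->
  [/\ 2 <= union_nb e u v, union_nb e u v <= #|T|,
      delta1 e <= union_nb e u v & union_nb e u v <= delta2 e].
Proof.
move=> euv; split.
- have nuv : u != v by apply/eqP=> E; rewrite E eirr in euv.
  have := cards2 u v; rewrite nuv => <-; apply: subset_leq_card; apply/subsetP=> y.
  by rewrite !inE => /orP[] /eqP->; apply/orP; [right; rewrite esym | left].
- exact: max_card.
- by rewrite /delta1; apply: (@bigmin_le _ _ _ _ _ (u, v)); rewrite ?mem_index_enum.
- by rewrite /delta2 (leq_bigmax_cond (u, v)).
Qed.

Lemma delta_bounds u v : e u v ->
  [/\ 2 <= delta1 e, delta1 e <= #|T| & delta2 e <= #|T|].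
Proof.
move=> euv; have [h1 h2 h3 h4] := union_bounds _ _ euv; split.
- rewrite /delta1; apply: (big_ind (fun m => 2 <= m)) => //.
  + lia.
  + by move=> a b ha hb; rewrite leq_min ha hb.
  + by case=> a b /= /union_bounds[].
- lia.
- rewrite /delta2; apply: (big_ind (fun m => m <= #|T|)) => //.
  + by move=> a b ha hb; rewrite geq_max ha hb.
  + by case=> a b /= /union_bounds[].
Qed.

Lemma sigma_pos u v : e u v -> 0 < sigma1 e.
Proof.
move=> euv; apply/card_gt0P; exists [set u; v]; rewrite inE /nearly_indep1.
have -> : induced_edges e [set u; v] = [set [set u; v]].
  apply/setP=> E; rewrite inE; apply/imset2P/eqP.
  - case=> a b; rewrite !inE => /orP[] /eqP-> /andP[/orP[] /eqP-> h] ->;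
      rewrite ?eirr // in h; by rewrite setUC.
  - by move=> ->; exists u v; rewrite ?inE ?eqxx ?orbT ?euv.
by rewrite cards1.
Qed.

End Comb.

Arguments iso {T} e S.
Arguments out {T} e S.

Local Open Scope ring_scope.

Lemma real_part (R : realFieldType) (n d1 d2 s i : R) : 0 < s -> d2 <= n -> 2 <= d1 -> d1 <= n ->
  i + i <= s * (n - d1) -> s * (n - d2) <= i + (n - d2) * i ->
  [/\ 2 <= (3 * n + 2 - 3 * d2) / (n + 1 - d2),
      (3 * n + 2 - 3 * d2) / (n + 1 - d2) <= (i + 2 * s) / s,
      (i + 2 * s) / s <= (n + 4 - d1) / 2
    & (n + 4 - d1) / 2 <= (n + 2) / 2].
Proof.
move=> sp d2n d1g d1n hU hL.
have den : 0 < n + 1 - d2 by lra.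
split.
- rewrite ler_pdivlMr //; lra.
- rewrite ler_pdivrMr // mulrAC ler_pdivlMr //.
  rewrite -subr_ge0.
  have -> : (i + 2 * s) * (n + 1 - d2) - (3 * n + 2 - 3 * d2) * s = i + (n - d2) * i - s * (n - d2) by ring.
  by rewrite subr_ge0.
- rewrite ler_pdivrMr // mulrAC ler_pdivlMr //.
  rewrite -subr_ge0.
  have -> : (n + 4 - d1) * s - (i + 2 * s) * 2 = s * (n - d1) - (i + i) by ring.
  by rewrite subr_ge0.
- rewrite ler_pM2r ?invr_gt0 ?ltr0n //; lra.
Qed.

Theorem mainTheorem8 (R : realFieldType) (T : finType) (e : rel T) :
  simple_graph e ->
  (exists u v : T, e u v) ->
  let n : R := (#|T|)%:R in
  let d1 : R := (delta1 e)%:R in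
  let d2 : R := (delta2 e)%:R in
  [/\ 2 <= (3 * n + 2 - 3 * d2) / (n + 1 - d2),
      (3 * n + 2 - 3 * d2) / (n + 1 - d2) <= av1 e R,
      av1 e R <= (n + 4 - d1) / 2
    & (n + 4 - d1) / 2 <= (n + 2) / 2].
Proof.
case=> esym eirr [u [v euv]] n d1 d2.
have [hd1 hd1n hd2n] := delta_bounds _ _ esym eirr _ _ euv.
have sp := sigma_pos _ _ eirr _ _ euv.
set I := (\sum_(S | nearly_indep1 e S) #|iso e S|)%N.
have sig : sigma1 e = (\sum_(S | nearly_indep1 e S) 1)%N by rewrite sum1dep_card.
have hS1 : S1 e = (I + 2 * sigma1 e)%N.
  rewrite /S1 sig bigop.big_distrr /= -big_split /=; apply: eq_bigr => S NS.
  have [a [b [_ h _ _]]] := per_S _ _ esym eirr _ NS; rewrite h; lia.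
have hU : (I + I <= sigma1 e * (#|T| - delta1 e))%N.
  rewrite {2}/I (sum_iso_out _ _ esym eirr) -big_split sig bigop.big_distrl /=.
  apply: leq_sum => S NS; have [a [b [eab _ h _]]] := per_S _ _ esym eirr _ NS.
  have [_ _ h3 _] := union_bounds _ _ esym eirr _ _ eab; rewrite ?mul1n; set N := #|T| in h *; lia.
have hL : (sigma1 e * (#|T| - delta2 e) <= I + (#|T| - delta2 e) * I)%N.
  rewrite {1}/I (sum_iso_out _ _ esym eirr) bigop.big_distrr -big_split sig bigop.big_distrl /=.
  apply: leq_sum => S NS; have [a [b [eab _ _ h]]] := per_S _ _ esym eirr _ NS.
  have [_ _ _ h4] := union_bounds _ _ esym eirr _ _ eab.
  set N := #|T| in h h4 *; rewrite mul1n.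
  have [/h H|] := eqVneq (iso e S) set0.
    have H' : (N - delta2 e <= #|out e S|)%N by lia.
    exact: leq_trans H' (leq_addr _ _).
  rewrite -card_gt0 => hp; have := leq_mul (leqnn (N - delta2 e)) hp.
  rewrite muln1 => H; exact: leq_trans H (leq_addl _ _).
have hU' : (I + I)%:R <= (sigma1 e)%:R * (n - d1) :> R.
  by rewrite /n /d1 -natrB // -natrM ler_nat.
have hL' : (sigma1 e)%:R * (n - d2) <= I%:R + (n - d2) * I%:R :> R.
  by rewrite /n /d2 -natrB // -!natrM -natrD ler_nat.
have av : av1 e R = (I%:R + 2 * (sigma1 e)%:R) / (sigma1 e)%:R.
  by rewrite /av1 hS1 natrD natrM.
rewrite av; apply: real_part.
- by rewrite ltr0n.
- by rewrite ler_nat.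
- by rewrite (ler_nat R 2).
- by rewrite ler_nat.
- by rewrite -natrD.
- exact: hL'.
Qed.
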